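(* With $Q$, $v$, $\lambda$, $Q_\infty$ and $S(\infty)$ as in the context, the forgetful functor (from representations of $\overline{Q_\infty}$ to representations of $\bar Q$) induces a bijection between isomorphism classes of simple finite-dimensional $\Pi^\lambda Q_\infty$-modules $X$ with $\dim X_\infty\le 1$ other than $S(\infty)$, and isomorphism classes of nearly representations of $\Pi^\lambda Q$ (with respect to $v$) which are simple as representations of $\bar Q$.
   Context: $K$ is an algebraically closed field, $Q$ a quiver with vertex set $I$, $v\in I$, $\lambda\in K^I$. Each arrow $a$ has tail $t(a)$ and head $h(a)$. The double $\bar Q$ is obtained by adjoining an arrow $a^*\colon h(a)\to t(a)$ for each arrow $a$. For a finite-dimensional representation $X$ of $\bar Q$ and $i\in I$ set $X_{c,i}=\sum_{a\in Q,\,h(a)=i}X_aX_{a^*}-\sum_{a\in Q,\,t(a)=i}X_{a^*}X_a-\lambda_i 1_{X_i}$. The deformed preprojective algebra $\Pi^\lambda Q$ is $K\bar Q$ modulo the relation $\sum_{a\in Q}(aa^*-a^*a)-\sum_i\lambda_ie_i$; its modules are representations with all $X_{c,i}=0$. A nearly representation of $\Pi^\lambda Q$ (with respect to $v$) is a finite-dimensional representation $X$ of $\bar Q$ with $\sum_i\lambda_i\dim X_i=0$, $X_{c,i}=0$ for $i\ne v$ and $\operatorname{rank}(X_{c,v})\le1$. $Q_\infty$ is obtained from $Q$ by adjoining a vertex $\infty$ and an arrow $a\colon\infty\to v$; $\lambda$ is extended by $\lambda_\infty=0$; $S(\infty)$ is the simple $\Pi^\lambda Q_\infty$-module that is one-dimensional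 at $\infty$ and zero elsewhere. *)

(* Defs.v *)
From HB Require Import structures.
From mathcomp Require Import all_boot all_order all_algebra.
Set Implicit Arguments. Unset Strict Implicit. Unset Printing Implicit Defensive.
Import GRing.Theory.
Local Open Scope ring_scope.

(* A finite-dimensional representation assigns K^(rdim i) to vertex i and to
   each arrow b a linear map K^(rdim (tl b)) -> K^(rdim (hd b)), encoded as a
   matrix acting on ROW vectors by right multiplication (v |-> v *m rmap b).
   Hence the composite "first f then g" has matrix  F *m G. *)
Section Reps.
Variables (K : fieldType) (V B : Type) (tl hd : B -> V).

Record rep := Rep {
  rdim : V -> nat;
  rmap : forall b : B, 'M[K]_(rdim (tl b), rdim (hd b)) }.

Definition stable (X : rep) (U : forall i, 'M[K]_(rdim X i)) : Prop :=
  forall b : B, (U (tl b) *m rmap X b <= U (hd b))%MS.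

Definition simple_rep (X : rep) : Prop :=
  (exists i, (0 < rdim X i)%N) /\
  forall U : forall i, 'M[K]_(rdim X i), stable U ->
    (forall i, U i = 0) \/ (forall i, row_full (U i)).

Definition rep_iso (X Y : rep) : Prop :=
  exists phi : forall i, 'M[K]_(rdim X i, rdim Y i),
    (forall i, row_free (phi i) && row_full (phi i)) /\
    (forall b, rmap X b *m phi (hd b) = phi (tl b) *m rmap Y b).
End Reps.

(* Arrows of the double of (A, t, h): inl a = a, inr a = a^*. *)
Definition dtail (I A : Type) (t h : A -> I) (b : A + A) : I :=
  match b with inl a => t a | inr a => h a end.
Definition dhead (I A : Type) (t h : A -> I) (b : A + A) : I :=
  match b with inl a => h a | inr a => t a end.

Definition drep (K : fieldType) (I A : Type) (t h : A -> I) :=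
  rep K (dtail t h) (dhead t h).

Section Defect.
Variables (K : fieldType) (I A : finType) (t h : A -> I) (lam : I -> K).

(* X_{c,i} = sum_{h a = i} X_a X_{a^*} - sum_{t a = i} X_{a^*} X_a - lam_i 1.
   X_a X_{a^*} (apply a^* first) has matrix  X_{a^*} *m X_a.  conform_mx only
   serves as the transport along the equality h a = i (resp. t a = i). *)
Definition defect (X : drep K t h) (i : I) : 'M[K]_(rdim X i) :=
  \sum_(a | h a == i) conform_mx (0 : 'M[K]_(rdim X i))
                         (rmap X (inr a) *m rmap X (inl a))
  - \sum_(a | t a == i) conform_mx (0 : 'M[K]_(rdim X i))
                         (rmap X (inl a) *m rmap X (inr a))
  - lam i *: 1%:M.

Definition is_Pi_module (X : drep K t h) : Prop := forall i, defect X i = 0.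

Definition nearly_rep (v : I) (X : drep K t h) : Prop :=
  [/\ \sum_i lam i * (rdim X i)%:R = 0,
      (forall i, i != v -> defect X i = 0)
    & (\rank (defect X v) <= 1)%N].
End Defect.

(* Vertices option I (None = infinity), arrows option A (None = new arrow
   infinity -> v). *)
Definition itail (I A : Type) (t : A -> I) (o : option A) : option I :=
  match o with Some a => Some (t a) | None => None end.
Definition ihead (I A : Type) (h : A -> I) (v : I) (o : option A) : option I :=
  match o with Some a => Some (h a) | None => Some v end.
Definition ilam (K : fieldType) (I : Type) (lam : I -> K) (o : option I) : K :=
  match o with Some i => lam i | None => 0 end.

Definition drep_inf (K : fieldType) (I A : Type) (t h : A -> I) (v : I) :=
  drep K (itail t) (ihead h v).

Definition S_inf (K : fieldType) (I A : Type) (t h : A -> I) (v : I)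
  : drep_inf K t h v :=
  @Rep K _ _ _ _ (fun o => if o is None then 1%N else 0%N) (fun _ => 0).

Definition restrict (K : fieldType) (I A : Type) (t h : A -> I) (v : I)
  (X : drep_inf K t h v) : drep K t h :=
  @Rep K _ _ (dtail t h) (dhead t h) (fun i => rdim X (Some i))
    (fun b => match b as b0 return
              'M[K]_(rdim X (Some (dtail t h b0)), rdim X (Some (dhead t h b0)))
            with
            | inl a => rmap X (inl (Some a))
            | inr a => rmap X (inr (Some a))
            end).

Definition source_obj (K : fieldType) (I A : finType) (t h : A -> I) (v : I)
  (lam : I -> K) (X : drep_inf K t h v) : Prop :=
  [/\ is_Pi_module (ilam lam) X, simple_rep X, (rdim X None <= 1)%N
    & ~ rep_iso X (S_inf K t h v)].

Definition target_obj (K : fieldType) (I A : finType) (t h : A -> I) (v : I)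
  (lam : I -> K) (Y : drep K t h) : Prop :=
  nearly_rep lam v Y /\ simple_rep Y.

(* Main.v *)
Require Import Defs.
From HB Require Import structures.
From mathcomp Require Import all_boot all_order all_algebra.
Set Implicit Arguments. Unset Strict Implicit. Unset Printing Implicit Defensive.
Import GRing.Theory.
Local Open Scope ring_scope.

Lemma sum_option (M : nmodType) (I : finType) (F : option I -> M) :
  \sum_o F o = F None + \sum_i F (Some i).
Proof.
rewrite (bigD1 None) //=; congr (_ + _).
rewrite (reindex_omap Some id) => [|[i|]//].
by apply: eq_bigl => i /=; rewrite eqxx.
Qed.

Lemma sum_option_cond (M : nmodType) (I : finType) (P : pred (option I)) (F : option I -> M) :
  \sum_(o | P o) F o = (if P None then F None else 0) + \sum_(i | P (Some i)) F (Some i).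
Proof. by rewrite big_mkcond sum_option [in RHS]big_mkcond. Qed.


Section Gen.
Variables (K : fieldType) (I A : finType) (t h : A -> I) (lam : I -> K).

Lemma mx_rows0 m n (M : 'M[K]_(m, n)) : m = 0%N -> M = 0.
Proof. by move=> E; move: M; rewrite E => M; apply/matrixP => -[]. Qed.

Lemma mx_cols0 m n (M : 'M[K]_(m, n)) : n = 0%N -> M = 0.
Proof. by move=> E; move: M; rewrite E => M; apply/matrixP => i []. Qed.

Lemma conf_tr (f : I -> nat) (j i : I) (M : 'M[K]_(f j)) : j == i ->
  \tr (conform_mx (0 : 'M_(f i)) M) = \tr M.
Proof. by move=> /eqP <-; rewrite conform_mx_id. Qed.

Lemma conf_stable (f : I -> nat) (U : forall i, 'M[K]_(f i)) (j i : I) (M : 'M[K]_(f j)) :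
  j == i -> (U j *m M <= U j)%MS -> (U i *m conform_mx (0 : 'M_(f i)) M <= U i)%MS.
Proof. by move=> /eqP <-; rewrite conform_mx_id. Qed.

Lemma conf_nat (f g : I -> nat) (psi : forall i, 'M[K]_(f i, g i)) (j i : I)
  (M : 'M[K]_(f j)) (M' : 'M[K]_(g j)) :
  j == i -> M *m psi j = psi j *m M' ->
  conform_mx (0 : 'M_(f i)) M *m psi i = psi i *m conform_mx (0 : 'M_(g i)) M'.
Proof. by move=> /eqP <-; rewrite !conform_mx_id. Qed.

Lemma trN n (M : 'M[K]_n) : \tr (- M) = - \tr M.
Proof. by rewrite /mxtrace -sumrN; apply: eq_bigr => i _; rewrite mxE. Qed.

Lemma trS n (J : Type) (r : seq J) (P : pred J) (F : J -> 'M[K]_n) :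
  \tr (\sum_(a <- r | P a) F a) = \sum_(a <- r | P a) \tr (F a).
Proof.
elim/big_rec2: _ => [|a x y _ <-]; first by rewrite /mxtrace; apply: big1 => i _; rewrite mxE.
by rewrite mxtraceD.
Qed.

Lemma defect_trace (X : drep K t h) :
  \sum_i \tr (defect lam X i) = - \sum_i lam i * (rdim X i)%:R.
Proof.
rewrite /defect.
have -> : \sum_i \tr
   (\sum_(a | h a == i) conform_mx (0 : 'M_(rdim X i)) (rmap X (inr a) *m rmap X (inl a)) -
    \sum_(a | t a == i) conform_mx (0 : 'M_(rdim X i)) (rmap X (inl a) *m rmap X (inr a)) -
    lam i *: 1%:M) =
  \sum_i (\sum_(a | h a == i) \tr (rmap X (inr a) *m rmap X (inl a)) -
        \sum_(a | t a == i) \tr (rmap X (inl a) *m rmap X (inr a)) -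
        lam i * (rdim X i)%:R).
  apply: eq_bigr => i _.
  rewrite !mxtraceD !trN mxtraceZ mxtrace1 !trS.
  by congr (_ - _ - _); apply: eq_bigr => a Ha; exact: conf_tr.
rewrite !sumrB.
have P (g : A -> I) (F : A -> K) : \sum_i \sum_(a | g a == i) F a = \sum_a F a.
  by rewrite (partition_big g predT) //.
rewrite !P.
under eq_bigr do rewrite mxtrace_mulC.
by rewrite subrr sub0r.
Qed.

Lemma stable_defect (X : drep K t h) (U : forall i, 'M[K]_(rdim X i)) i :
  stable U -> (U i *m defect lam X i <= U i)%MS.
Proof.
move=> sU; rewrite /defect !mulmxBr.
have Nsub m n (M : 'M[K]_(m, n)) (W : 'M[K]_n) : (M <= W)%MS -> (- M <= W)%MS.
  by move=> H; rewrite -scaleN1r; apply: scalemx_sub.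
apply: addmx_sub; [apply: addmx_sub|]; last first.
- by apply: Nsub; rewrite -scalemxAr mulmx1; apply: scalemx_sub.
- apply: Nsub; rewrite mulmx_sumr; apply: summx_sub => a Ha.
  apply: (conf_stable (f := rdim X)) => //.
  rewrite mulmxA; apply: submx_trans (sU (inr a)).
  exact: submxMr (sU (inl a)).
- rewrite mulmx_sumr; apply: summx_sub => a Ha.
  apply: (conf_stable (f := rdim X)) => //.
  rewrite mulmxA; apply: submx_trans (sU (inl a)).
  exact: submxMr (sU (inr a)).
Qed.

Lemma defect_nat (X Y : drep K t h) (psi : forall i, 'M[K]_(rdim X i, rdim Y i)) i :
  (forall b, rmap X b *m psi (dhead t h b) = psi (dtail t h b) *m rmap Y b) ->
  defect lam X i *m psi i = psi i *m defect lam Y i.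
Proof.
move=> H; rewrite /defect !mulmxBr !mulmxBl !mulmx_sumr !mulmx_suml.
congr (_ - _ - _).
- apply: eq_bigr => a Ha; apply: (conf_nat (f := rdim X) (g := rdim Y)) => //.
  by rewrite -mulmxA (H (inl a)) mulmxA (H (inr a)) mulmxA.
- apply: eq_bigr => a Ha; apply: (conf_nat (f := rdim X) (g := rdim Y)) => //.
  by rewrite -mulmxA (H (inr a)) mulmxA (H (inl a)) mulmxA.
- by rewrite -scalemxAl -scalemxAr mul1mx mulmx1.
Qed.

Lemma iso_dim (V B : Type) (tl hd : B -> V) (X Y : rep K tl hd) :
  rep_iso X Y -> forall i, rdim X i = rdim Y i.
Proof.
case=> phi [H _] i; have /andP[fr fu] := H i.
by move: fr fu; rewrite /row_free /row_full => /eqP e1 /eqP e2; rewrite -e1 e2.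
Qed.

Lemma nz_entry m n (C : 'M[K]_(m, n)) : C != 0 -> exists i j, C i j != 0.
Proof.
move=> nz; case: (boolP [exists i, exists j, C i j != 0]) => [/existsP[i /existsP[j H]]|H].
  by exists i, j.
case/eqP: nz; apply/matrixP => i j; rewrite mxE; move: H.
rewrite negb_exists => /forallP /(_ i); rewrite negb_exists => /forallP /(_ j).
by rewrite negbK => /eqP.
Qed.

Lemma row_col1 m (C : 'M[K]_(m, 1)) i n (p : 'M[K]_(1, n)) :
  row i (C *m p) = C i 0 *: p.
Proof. by rewrite row_mul [row i C]mx11_scalar mxE mul_scalar_mx. Qed.

Lemma col_sub m n k d (C : 'M[K]_(m, d)) (p : 'M[K]_(d, n)) (W : 'M[K]_(k, n)) :
  (d <= 1)%N -> C != 0 -> (C *m p <= W)%MS -> (p <= W)%MS.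
Proof.
case: d C p => [|[|//]] C p _ nz H.
  by move: nz; rewrite (@mx_cols0 _ _ C) ?eqxx.
have [i [j Hij]] := nz_entry nz; rewrite (ord1 j) in Hij.
have -> : p = (C i 0)^-1 *: row i (C *m p) by rewrite row_col1 scalerA mulVf ?scale1r.
by apply: scalemx_sub; apply: submx_trans H; exact: row_sub.
Qed.

Lemma nz_prod n (q : 'M[K]_(n, 1)) (p : 'M[K]_(1, n)) : q != 0 -> p != 0 -> q *m p != 0.
Proof.
move=> /nz_entry [i [j0 Hq]] /nz_entry [j1 [j Hp]].
rewrite (ord1 j0) in Hq; rewrite (ord1 j1) in Hp.
apply/eqP => /matrixP /(_ i j); rewrite !mxE big_ord1 => /eqP.
by rewrite mulf_eq0 (negbTE Hq) (negbTE Hp).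
Qed.

Lemma core n n' d d' (p : 'M[K]_(d, n)) (q : 'M[K]_(n, d)) (p' : 'M[K]_(d', n'))
  (q' : 'M[K]_(n', d')) (psi : 'M[K]_(n, n')) :
  row_free psi -> row_full psi -> (d <= 1)%N -> (d' <= 1)%N ->
  (d = 1%N -> p != 0 /\ q != 0) -> (d' = 1%N -> p' != 0 /\ q' != 0) ->
  q *m p *m psi = psi *m (q' *m p') ->
  exists phi : 'M[K]_(d, d'),
    [/\ row_free phi && row_full phi, p *m psi = phi *m p' & q *m phi = psi *m q'].
Proof.
move=> Hf Hfu.
case: d p q => [|[|//]] p q; case: d' p' q' => [|[|//]] p' q' _ _ H1 H1' E.
- exists 0; split.
  + by rewrite /row_free /row_full mxrank0.
  + by apply/matrixP => -[].
  + by apply/matrixP => i [].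
- exfalso; have [np' nq'] := H1' erefl.
  move: E; rewrite (@mx_cols0 _ _ q) // mul0mx mul0mx => E.
  have [B HB] := row_fullP Hfu.
  have : q' *m p' = 0 by rewrite -[q' *m p']mul1mx -HB -mulmxA -E mulmx0.
  by apply/eqP; exact: nz_prod.
- exfalso; have [np nq] := H1 erefl.
  move: E; rewrite (@mx_cols0 _ _ q') // mul0mx mulmx0 => E.
  have : q *m p = 0 by apply/eqP; rewrite -(mulmx_free_eq0 _ Hf) E eqxx.
  by apply/eqP; exact: nz_prod.
- have [np nq] := H1 erefl; have [np' nq'] := H1' erefl.
  set r := p *m psi; set w := psi *m q'.
  have nr : r != 0.
    by rewrite /r (mulmx_free_eq0 _ Hf).
  have E' : q *m r = w *m p' by rewrite /r /w mulmxA E mulmxA.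
  have [i [j0 Hq]] := nz_entry nq; rewrite (ord1 j0) in Hq.
  have Ei : q i 0 *: r = w i 0 *: p' by rewrite -!row_col1 E'.
  set c := w i 0 / q i 0.
  have Er : r = c *: p'.
    have -> : r = (q i 0)^-1 *: (q i 0 *: r) by rewrite scalerA mulVf // scale1r.
    by rewrite Ei scalerA mulrC.
  have nc : c != 0 by apply: contra nr => /eqP c0; rewrite Er c0 scale0r.
  have Ew : c *: q = w.
    apply/eqP; rewrite -subr_eq0 -(@mulmx_free_eq0 _ _ _ _ (c *: q - w) p').
      by rewrite mulmxBl -scalemxAl scalemxAr -Er E' subrr.
    rewrite /row_free; apply/eqP/anti_leq.
    by rewrite rank_leq_row lt0n mxrank_eq0.
  exists c%:M; split.
  + by rewrite row_free_unit row_full_unit andbb unitmxE det_scalar1 unitfE.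
  + by rewrite -/r mul_scalar_mx.
  + by rewrite mul_mx_scalar.
Qed.

Lemma tr_small d (M : 'M[K]_d) : (d <= 1)%N -> \tr M = 0 -> M = 0.
Proof.
case: d M => [|[|//]] M _ H; first by apply/matrixP => -[].
apply/matrixP => i j; rewrite (ord1 i) (ord1 j) mxE; move: H.
by rewrite /mxtrace big_ord1.
Qed.
End Gen.

Section S.
Variables (K : fieldType) (I A : finType) (t h : A -> I) (v : I) (lam : I -> K).

Lemma defect_Some (X : drep_inf K t h v) i : i != v ->
  defect (ilam lam) X (Some i) = defect lam (restrict X) i.
Proof.
move=> ne.
rewrite /defect !sum_option_cond /=.
have E : forall x y : I, (Some x == Some y) = (x == y) by [].
rewrite E eq_sym (negbTE ne) !add0r.
by congr (_ - _ - _); apply: eq_bigl => a; exact: E.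
Qed.

Lemma defect_v (X : drep_inf K t h v) :
  defect (ilam lam) X (Some v) = defect lam (restrict X) v +
     rmap X (inr None) *m rmap X (inl None).
Proof.
rewrite /defect !sum_option_cond /=.
have E : forall x y : I, (Some x == Some y) = (x == y) by [].
rewrite E eqxx add0r conform_mx_id.
rewrite [RHS]addrC !addrA.
by congr (_ + _ - _ - _); apply: eq_bigl => a; exact: E.
Qed.

Lemma defect_None (X : drep_inf K t h v) :
  defect (ilam lam) X None = - (rmap X (inl None) *m rmap X (inr None)).
Proof.
rewrite /defect !sum_option_cond /= big_pred0 // conform_mx_id.
rewrite big_pred0 // scale0r. 
by rewrite !(addr0, add0r, subr0, sub0r).
Qed.


Lemma iso_Sinf (X : drep_inf K t h v) :
  (forall i, rdim X (Some i) = 0%N) -> rdim X None = 1%N -> rep_iso X (S_inf K t h v).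
Proof.
move=> H0 H1.
exists (fun o => match o as o0 return 'M[K]_(rdim X o0, rdim (S_inf K t h v) o0) with
                 | None => pid_mx 1 | Some i => 0 end); split.
  case=> [i|]; rewrite /row_free /row_full.
    by rewrite mxrank0 H0 eqxx.
  by rewrite rank_pid_mx ?H1.
case=> [[a|]|[a|]] /=; rewrite ?mulmx0 //.
by rewrite (@mx_rows0 _ _ _ (rmap X (inr None))) ?mul0mx //=; exact: H0.
Qed.
Lemma one_neq0 n : (0 < n)%N -> (1%:M : 'M[K]_n) != 0.
Proof.
case: n => // n _; apply/eqP => /matrixP /(_ ord0 ord0).
by rewrite !mxE eqxx /=; apply/eqP; rewrite oner_eq0.
Qed.

Lemma one0_dim n : (1%:M : 'M[K]_n) = 0 -> n = 0%N.
Proof. by case: n => // n H; move: (one_neq0 (n := n.+1) isT); rewrite H eqxx. Qed.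

Lemma full0_dim m n : row_full (0 : 'M[K]_(m, n)) -> n = 0%N.
Proof. by rewrite /row_full mxrank0 => /eqP. Qed.

Definition ext (X : drep_inf K t h v) (U : forall i, 'M[K]_(rdim X (Some i)))
  (Ui : 'M[K]_(rdim X None)) : forall o, 'M[K]_(rdim X o) :=
  fun o => match o as o0 return 'M[K]_(rdim X o0) with Some i => U i | None => Ui end.

Lemma src_nonzero (X : drep_inf K t h v) : source_obj lam X ->
  exists i, (0 < rdim X (Some i))%N.
Proof.
case=> _ [[o Ho] _] Hd Hni.
have [i Hi|H0] := pickP (fun i => 0 < rdim X (Some i))%N; first by exists i.
exfalso; apply: Hni; apply: iso_Sinf.
  by move=> i; move: (H0 i) => /=; case: (rdim X (Some i)).
case: o Ho => [i|]; first by move: (H0 i) => /= ->.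
by move: Hd; case: (rdim X None) => [|[|]].
Qed.

Lemma src_pq (X : drep_inf K t h v) : source_obj lam X -> rdim X None = 1%N ->
  rmap X (inl None) != 0 /\ rmap X (inr None) != 0.
Proof.
case=> _ [_ hS] Hd Hni H1; split; apply/eqP => H0.
- have := hS (ext (fun i => 0) 1%:M).
  case.
  + by case=> [[a|]|[a|]] /=; rewrite ?mul0mx ?sub0mx // H0 mulmx0 sub0mx.
  + by move=> /(_ None) /= /one0_dim; rewrite H1.
  + move=> H; apply: Hni; apply: iso_Sinf => // i.
    exact: (full0_dim (H (Some i))).
- have := hS (ext (fun i => 1%:M) 0).
  case.
  + by case=> [[a|]|[a|]] /=; rewrite ?mul0mx ?sub0mx ?submx1 // H0 mulmx0 sub0mx.
  + move=> H; apply: Hni; apply: iso_Sinf => // i.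
    exact: (one0_dim (H (Some i))).
  + by move=> /(_ None) /= /full0_dim; rewrite H1.
Qed.

Lemma src_defect_v (X : drep_inf K t h v) : is_Pi_module (ilam lam) X ->
  defect lam (restrict X) v = - (rmap X (inr None) *m rmap X (inl None)).
Proof. by move=> Pi; apply/eqP; rewrite -subr_eq0 opprK -defect_v Pi. Qed.

Lemma part1 (X : drep_inf K t h v) : source_obj lam X -> target_obj v lam (restrict X).
Proof.
move=> src; have src' := src; case: src' => Pi [_ hS] Hd Hni.
have Dv := src_defect_v Pi.
split; [split|].
- have := defect_trace (ilam lam) X.
  rewrite big1 => [|o _]; last by rewrite Pi mxtrace0.
  move/esym/eqP; rewrite oppr_eq0 sum_option /= mul0r add0r => /eqP.
  done.
- by move=> i ne; rewrite -defect_Some // Pi.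
- rewrite Dv mxrank_opp; apply: leq_trans (mxrankM_maxr _ _) _.
  exact: leq_trans (rank_leq_row _) Hd.
split; first exact: src_nonzero.
move=> U sU.
set q := rmap X (inr None); set p := rmap X (inl None).
have [Hq|Hq] := eqVneq (U v *m q) 0.
  have := hS (ext U 0); case.
  + case=> [[a|]|[a|]] /=; rewrite ?mul0mx ?sub0mx //.
    * exact: (sU (inl a)).
    * exact: (sU (inr a)).
    * by rewrite submx0 -/q Hq.
  + by move=> H; left => i; exact: (H (Some i)).
  + by move=> H; right => i; exact: (H (Some i)).
have Hp : (p <= U v)%MS.
  apply: (col_sub Hd Hq); rewrite -mulmxA.
  have -> : q *m p = - defect lam (restrict X) v by rewrite Dv opprK.
  rewrite mulmxN -scaleN1r; apply: scalemx_sub; exact: stable_defect.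
have := hS (ext U 1%:M); case.
+ case=> [[a|]|[a|]] /=; rewrite ?mul1mx ?submx1 //.
  * exact: (sU (inl a)).
  * exact: (sU (inr a)).
+ by move=> H; left => i; exact: (H (Some i)).
+ by move=> H; right => i; exact: (H (Some i)).
Qed.

Lemma part2 (X X' : drep_inf K t h v) : rep_iso X X' -> rep_iso (restrict X) (restrict X').
Proof.
case=> phi [H1 H2]; exists (fun i => phi (Some i)); split => [i|]; first exact: H1.
by case=> a; [exact: (H2 (inl (Some a))) | exact: (H2 (inr (Some a)))].
Qed.

Lemma part3 (X X' : drep_inf K t h v) : source_obj lam X -> source_obj lam X' ->
  rep_iso (restrict X) (restrict X') -> rep_iso X X'.
Proof.
move=> src src'; have src1 := src; have src1' := src'.
case: src1 => Pi _ Hd _; case: src1' => Pi' _ Hd' _.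
case=> psi [Hp Hc].
have N := defect_nat lam v Hc.
rewrite (src_defect_v Pi) (src_defect_v Pi') mulNmx mulmxN in N; move/oppr_inj: N => N.
have /andP[Hf Hfu] := Hp v.
have [phi [Hphi E1 E2]] := core Hf Hfu Hd Hd' (src_pq src) (src_pq src') N.
exists (fun o => match o as o0 return 'M[K]_(rdim X o0, rdim X' o0) with
                 | Some i => psi i | None => phi end); split.
  by case => [i|] /=; [exact: Hp | exact: Hphi].
case => [[a|]|[a|]] /=.
- exact: (Hc (inl a)).
- exact: E1.
- exact: (Hc (inr a)).
- exact: E2.
Qed.

Definition dX (Y : drep K t h) (o : option I) : nat :=
  match o with Some i => rdim Y i | None => \rank (defect lam Y v) end.

Definition mX (Y : drep K t h) (b : option A + option A) :
  'M[K]_(dX Y (dtail (itail t) (ihead h v) b), dX Y (dhead (itail t) (ihead h v) b)) :=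
  match b as b0 return
    'M[K]_(dX Y (dtail (itail t) (ihead h v) b0), dX Y (dhead (itail t) (ihead h v) b0)) with
  | inl o => match o as o0 return 'M[K]_(dX Y (itail t o0), dX Y (ihead h v o0)) with
             | Some a => rmap Y (inl a) | None => row_base (defect lam Y v) end
  | inr o => match o as o0 return 'M[K]_(dX Y (ihead h v o0), dX Y (itail t o0)) with
             | Some a => rmap Y (inr a) | None => - col_base (defect lam Y v) end
  end.

Definition mkX (Y : drep K t h) : drep_inf K t h v := @Rep K _ _ _ _ (dX Y) (mX Y).

Lemma mkX_defect (Y : drep K t h) i : defect lam (restrict (mkX Y)) i = defect lam Y i.
Proof. by []. Qed.

Lemma part4 (Y : drep K t h) : target_obj v lam Y ->
  exists X : drep_inf K t h v, source_obj lam X /\ rep_iso (restrict X) Y.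
Proof.
case=> [[Hsum Hne Hrk] [[i0 Hi0] hS]].
set D := defect lam Y v.
have trD : \tr D = 0.
  have := defect_trace lam Y; rewrite Hsum oppr0 (bigD1 v) //= big1 ?addr0 //.
  by move=> i Hi; rewrite Hne ?mxtrace0 //; move: Hi; rewrite ?andbT.
exists (mkX Y); split; last first.
  exists (fun i => 1%:M : 'M[K]_(rdim Y i)); split => [i|b].
    by rewrite row_free_unit row_full_unit unitmx1.
  by rewrite mulmx1 mul1mx; case: b.
split.
- case=> [i|].
  + have [->|ne] := eqVneq i v.
      rewrite defect_v mkX_defect -/D /=.
      by rewrite mulNmx mulmx_base subrr.
    by rewrite defect_Some // mkX_defect Hne.
  + rewrite defect_None /= mulmxN opprK; apply: tr_small => //.
    by rewrite mxtrace_mulC mulmx_base.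
- split; first by exists (Some i0).
  move=> U sU.
  have sU' : stable (fun i => U (Some i) : 'M[K]_(rdim Y i)).
    by case=> a; [exact: (sU (inl (Some a))) | exact: (sU (inr (Some a)))].
  case: (hS _ sU') => [H0|Hf].
  + left; case=> [i|]; first exact: H0.
    have := sU (inl None); rewrite /= H0 submx0.
    by rewrite (mulmx_free_eq0 _ (row_base_free _)) => /eqP.
  + right; case=> [i|]; first exact: Hf.
    have := sU (inr None) => /= H.
    have H1 : (1%:M <= U (Some v))%MS by rewrite sub1mx; exact: Hf.
    have H2 := submxMr (- col_base D) H1; rewrite mul1mx in H2.
    have H3 : (col_base D <= U None)%MS.
      rewrite -[col_base D]opprK -scaleN1r; apply: scalemx_sub.
      exact: submx_trans H2 H.
    rewrite -sub1mx; apply: submx_trans H3; rewrite sub1mx; exact: col_base_full.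
- exact: Hrk.
- move/iso_dim => Hd; move: (Hd (Some i0)) Hi0 => /= ->; done.
Qed.
End S.

Theorem lemma3p3 (K : closedFieldType) (I A : finType) (t h : A -> I)
  (v : I) (lam : I -> K) :
  [/\ (forall X : drep_inf K t h v,
         source_obj lam X -> target_obj v lam (restrict X)),
      (forall X X' : drep_inf K t h v,
         source_obj lam X -> source_obj lam X' ->
         rep_iso X X' -> rep_iso (restrict X) (restrict X')),
      (forall X X' : drep_inf K t h v,
         source_obj lam X -> source_obj lam X' ->
         rep_iso (restrict X) (restrict X') -> rep_iso X X')
    & (forall Y : drep K t h,
         target_obj v lam Y ->
         exists X : drep_inf K t h v, source_obj lam X /\ rep_iso (restrict X) Y)].
Proof.
split.
- by move=> X; apply: part1.
- by move=> X X' _ _; apply: part2.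
- by move=> X X'; apply: part3.
- by move=> Y; apply: part4.
Qed.
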